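(* Let $\mathcal A=(Q,\Sigma,\delta,\rho)$ be a connected bireversible Mealy automaton whose labeled orbit tree $\mathfrak t(\mathcal A)$ has no active self-liftable branch, and let $\mathfrak j$ be a jungle tree of $\mathfrak t(\mathcal A)$. Then all equivalence classes of the relation $\sim$ on the stems of $\mathfrak j$ have the same cardinality.
   Context: Mealy automata. A Mealy automaton is $\mathcal A=(Q,\Sigma,\delta,\rho)$ with $Q,\Sigma$ finite non-empty sets, $\delta=(\delta_i\colon Q\to Q)_{i\in\Sigma}$, $\rho=(\rho_x\colon\Sigma\to\Sigma)_{x\in Q}$; transitions $x\xrightarrow{i\mid\rho_x(i)}\delta_i(x)$. Invertible: each $\rho_x$ a permutation of $\Sigma$; reversible: each $\delta_i$ a permutation of $Q$; bireversible: invertible, reversible, and for each $j\in\Sigma$ the map $x\mapsto\delta_{\rho_x^{-1}(j)}(x)$ is a permutation of $Q$. Connected: the directed graph on $Q$ with edges $x\to\delta_i(x)$ is connected. Extensions: $\rho_x(i\mathbf s)=\rho_x(i)\rho_{\delta_i(x)}(\mathbf s)$ on $\Sigma^*$; $\rho_{x_1\cdots x_m}=\rho_{x_m}\circ\cdots\circ\rho_{x_1}$; dually $\delta_i(x\mathbf u)=\delta_i(x)\delta_{\rho_x(i)}(\mathbf u)$ on $Q^*$, $\delta_{i_1\cdots i_m}=\delta_{i_m}\circ\cdots\circ\delta_{i_1}$. The connected components of $\mathcal A^n$ (stateset $Q^n$, transitions $\mathbf u\xrightarrow{i\mid\rho_{\mathbf u}(i)}\delta_i(\mathbf u)$) are,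 for reversible $\mathcal A$, the orbits of $Q^n$ under the maps $\delta_{\mathbf s}$. Orbit tree $\mathfrak t(\mathcal A)$: vertices at level $n\ge0$ are the connected components of $\mathcal A^n$; an edge from the component of $\mathbf u\in Q^n$ to that of $\mathbf ux$ for all $\mathbf u,x$; edge $C\to D$ labeled $\#D/\#C$. $\top,\bot$ = first/last vertex of a downward path; level of an edge/path = level of its top vertex. A word of $Q^*\cup Q^\omega$ represents the initial path through the components of its prefixes. Edge $e$ is liftable to $f$ if every word of $\bot(e)$ has a suffix in $\bot(f)$; paths are liftable if corresponding edges are. $f$ is a legitimate child of $e$ if $\top(f)=\bot(e)$ and $f$ is liftable to $e$. A path/subtree $\mathfrak s$ is $k$-self-liftable if for all $i\ge0$ every path in $\mathfrak s$ starting at level $i+k$ is liftable to a path in $\mathfrak s$ starting at level $i$; self-liftable if $k$-self-liftable for some $k>0$. A branch (infinite initial path) is active if its labels are not eventually all $1$. Jungle trees: for a finite 1-self-liftable initial path $\mathbf e$ of length $n$ whose last edge has at least two legitimate children, all labeled $1$, $\mathfrak j(\mathbf e)$ consists of $\mathbf e$ plus all edges descending from $\bot(\mathbf e)$ that are liftable to the last edge of $\mathbf e$. Stems: the words of $\bot(\mathbf e)\subseteq Q^n$. A $\mathfrak j$-word is a word representing an initial path of $\mathfrak j$. For stems $\mathbf u,\mathbf v$: $\mathbf u\sim\mathbf v$ iff there is $\mathbf s\in Q^*$ such that $\mathbf{usv}$ is a $\mathfrak j$-word and $\rho_{\mathbf{us}}$ is the identity of $\Sigma^*$ ($\sim$ is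 an equivalence relation). *)

(* Defs.v *)
From HB Require Import structures.
From mathcomp Require Import all_boot all_algebra.
From mathcomp Require Import boolp.
From Stdlib Require Import Relations.

Set Implicit Arguments.
Unset Strict Implicit.
Unset Printing Implicit Defensive.

Section Mealy.
(* A Mealy automaton (Q, Sg, delta, rho):  x --i|rho x i--> delta i x. *)
Variables (Q Sg : finType) (delta : Sg -> Q -> Q) (rho : Q -> Sg -> Sg).

Definition invertible := forall x : Q, bijective (rho x).
Definition reversible := forall i : Sg, bijective (delta i).
(* finv (rho x) is the inverse permutation of rho x when rho x is injective *)
Definition bireversible :=
  [/\ invertible, reversible &
      forall j : Sg, bijective (fun x : Q => delta (finv (rho x) j) x)].
Definition connected_automaton :=
  forall x y : Q, clos_refl_sym_trans Q (fun a b => exists i, b = delta i a) x y.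

Fixpoint rho_st (x : Q) (s : seq Sg) : seq Sg :=
  if s is i :: s' then rho x i :: rho_st (delta i x) s' else [::].
(* rho_{x1...xm} = rho_{xm} o ... o rho_{x1} *)
Fixpoint rho_word (u : seq Q) (s : seq Sg) : seq Sg :=
  if u is x :: u' then rho_word u' (rho_st x s) else s.
Fixpoint delta_st (i : Sg) (u : seq Q) : seq Q :=
  if u is x :: u' then delta i x :: delta_st (rho x i) u' else [::].

(* u and v lie in the same connected component of A^n (n = |u|): equivalence
   closure of the transition graph  u --> delta_i(u)  of A^n. *)
Definition comp (u v : seq Q) : Prop :=
  clos_refl_sym_trans (seq Q) (fun a b => exists i, b = delta_st i a) u v.

Definition cardC (u : seq Q) : nat :=
  #|[set t : (size u).-tuple Q | `[< comp (val t) u >] ]|.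

(* An edge of the orbit tree is represented by any word w (|w| >= 1) of its
   bottom vertex; its top vertex is the component of the prefix of length
   |w|-1, its level is |w|-1.  Two words represent the same edge iff comp. *)
Definition label (w : seq Q) : rat :=
  ((cardC w)%:R / (cardC (take (size w).-1 w))%:R)%R.

Definition liftable_edge (e f : seq Q) : Prop :=
  forall w, comp w e -> comp (drop (size w - size f) w) f.

(* downward paths: lists of consecutive edges *)
Fixpoint is_path (p : seq (seq Q)) : Prop :=
  match p with
  | e1 :: ((e2 :: _) as p') =>
      size e2 = (size e1).+1 /\ comp (take (size e1) e2) e1 /\ is_path p'
  | _ => True
  end.

Definition starts_at (p : seq (seq Q)) (l : nat) : Prop :=
  if p is e :: _ then size e = l.+1 else False.

Fixpoint liftable_path (p p' : seq (seq Q)) : Prop :=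
  match p, p' with
  | [::], [::] => True
  | e :: q, f :: q' => liftable_edge e f /\ liftable_path q q'
  | _, _ => False
  end.

(* a subtree / path is given by its set of edges (a comp-closed predicate) *)
Definition all_in (s : seq Q -> Prop) (p : seq (seq Q)) : Prop :=
  forall e, e \in p -> s e.

Definition k_self_liftable (k : nat) (s : seq Q -> Prop) : Prop :=
  forall (i : nat) (p : seq (seq Q)),
    is_path p -> all_in s p -> starts_at p (i + k) ->
    exists p', [/\ is_path p', all_in s p', starts_at p' i & liftable_path p p'].

Definition self_liftable (s : seq Q -> Prop) : Prop :=
  exists k, 0 < k /\ k_self_liftable k s.

(* branches: infinite initial paths, as sequences of vertices b n at level n *)
Definition is_branch (b : nat -> seq Q) : Prop :=
  forall n, size (b n) = n /\ comp (take n (b n.+1)) (b n).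
Definition in_branch (b : nat -> seq Q) (e : seq Q) : Prop :=
  exists n, comp e (b n.+1).
Definition active (b : nat -> seq Q) : Prop :=
  forall N, exists n, N <= n /\ label (b n.+1) <> 1%R.

(* finite initial path represented by a word z (edges = prefixes of z) *)
Definition in_ipath (z : seq Q) (e : seq Q) : Prop :=
  exists m, 0 < m <= size z /\ comp e (take m z).

(* the last edge of the initial path of z is z itself *)
Definition child (e f : seq Q) : Prop :=
  size f = (size e).+1 /\ comp (take (size e) f) e.
Definition legit_child (e f : seq Q) : Prop := child e f /\ liftable_edge f e.

Definition jungle_base (z : seq Q) : Prop :=
  [/\ 0 < size z,
      k_self_liftable 1 (in_ipath z),
      (exists f1 f2, [/\ legit_child z f1, legit_child z f2 & ~ comp f1 f2]) &
      (forall f, legit_child z f -> label f = 1%R)].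

Definition in_jungle (z : seq Q) (f : seq Q) : Prop :=
  in_ipath z f \/
  [/\ size z < size f, comp (take (size z) f) z & liftable_edge f z].

Definition jword (z w : seq Q) : Prop :=
  forall m, 0 < m <= size w -> in_jungle z (take m w).

Definition stem (z u : seq Q) : Prop := comp u z.

Definition jsim (z u v : seq Q) : Prop :=
  exists s : seq Q, jword z (u ++ s ++ v) /\
    forall t : seq Sg, rho_word (u ++ s) t = t.

Definition jclass (z u : seq Q) : {set (size z).-tuple Q} :=
  [set t : (size z).-tuple Q | `[< stem z (val t) /\ jsim z (val t) u >] ].

End Mealy.

(* Main.v *)
Require Import Defs.
From HB Require Import structures.
From mathcomp Require Import all_boot all_algebra.
From mathcomp Require Import boolp.
From Stdlib Require Import Relations.

Section Aux.
Variables (Q Sg : finType) (delta : Sg -> Q -> Q) (rho : Q -> Sg -> Sg).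

Definition out (i : Sg) (u : seq Q) : Sg := foldl (fun i x => rho x i) i u.

Lemma size_dst i u : size (delta_st delta rho i u) = size u.
Proof. by elim: u i => [|x u IH] i //=; rewrite IH. Qed.

Lemma dst_cat i u w : delta_st delta rho i (u ++ w) =
  delta_st delta rho i u ++ delta_st delta rho (out i u) w.
Proof. by elim: u i => [|x u IH] i //=; rewrite IH. Qed.

Lemma dst_take i m u : take m (delta_st delta rho i u) = delta_st delta rho i (take m u).
Proof. by elim: u i m => [|x u IH] i [|m] //=; rewrite IH. Qed.

Lemma out_cat i u w : out (out i u) w = out i (u ++ w).
Proof. by rewrite /out foldl_cat. Qed.

Lemma rho_word_cons w i t : rho_word delta rho w (i :: t) =
  out i w :: rho_word delta rho (delta_st delta rho i w) t.
Proof. by elim: w i t => [|x w IH] i t //=; rewrite IH. Qed.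

Lemma comp_step (i : Sg) (x : seq Q) : Defs.comp delta rho x (delta_st delta rho i x).
Proof. apply: rst_step; by exists i. Qed.

Lemma comp_size {a b} : Defs.comp delta rho a b -> size a = size b.
Proof.
elim.
- by move=> x y [i ->]; rewrite size_dst.
- by [].
- by move=> x y _ ->.
- by move=> x y w _ -> _ ->.
Qed.

Lemma comp_take m {a b} : Defs.comp delta rho a b -> Defs.comp delta rho (take m a) (take m b).
Proof.
elim.
- by move=> x y [i ->]; rewrite dst_take; apply: comp_step.
- by move=> x; apply: rst_refl.
- by move=> x y _ H; apply: rst_sym.
- by move=> x y w _ H1 _ H2; apply: rst_trans H2.
Qed.

Lemma in_jungle_comp z f f' : in_jungle delta rho z f -> Defs.comp delta rho f' f ->
  in_jungle delta rho z f'.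
Proof.
move=> [[m [Hm Hc]]|[Hs Ht Hl]] Hff'.
- left; exists m; split=> //; exact: rst_trans Hff' Hc.
- right; split.
  + by rewrite (comp_size Hff').
  + exact: rst_trans (comp_take (size z) Hff') Ht.
  + move=> w Hw; apply: Hl; exact: rst_trans Hw Hff'.
Qed.

Hypothesis rev : reversible delta.

Lemma dst_inj i u v : size u = size v ->
  delta_st delta rho i u = delta_st delta rho i v -> u = v.
Proof.
elim: u v i => [|x u IH] [|y v] i //= [Hs] [Hxy Huv].
have exy : x = y by apply: (bij_inj (rev i)).
by subst y; rewrite (IH v _ Hs Huv).
Qed.

Lemma dst_tupleP {n} (i : Sg) (t : n.-tuple Q) : size (delta_st delta rho i t) == n.
Proof. by rewrite size_dst size_tuple. Qed.
Definition dtup {n} (i : Sg) (t : n.-tuple Q) : n.-tuple Q := Tuple (dst_tupleP i t).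

Lemma dtup_inj n i : injective (@dtup n i).
Proof.
move=> a b /(congr1 val) /= H; apply: val_inj; apply: (@dst_inj i _ _ _ H).
by rewrite !size_tuple.
Qed.

Lemma class_step z u i :
  #|jclass delta rho z u| <= #|jclass delta rho z (delta_st delta rho i u)|.
Proof.
rewrite -(card_imset _ (@dtup_inj _ i)); apply: subset_leq_card.
apply/subsetP => y /imsetP [t]; rewrite !inE => /asboolP [Hst [s [Hj Hr]]] ->.
apply/asboolP; split.
  rewrite /stem /=; apply: rst_trans Hst; apply: rst_sym; exact: comp_step.
exists (delta_st delta rho (out i t) s); split.
- have Hi : out i (t ++ s) = i.
    by have := Hr [:: i]; rewrite rho_word_cons => -[].
  have -> : (val (dtup i t) ++ delta_st delta rho (out i t) s ++ delta_st delta rho i u)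
     = delta_st delta rho i (t ++ s ++ u).
    by rewrite /= !dst_cat out_cat Hi.
  move=> m Hm; rewrite dst_take.
  have Hm' : 0 < m <= size (t ++ s ++ u) by rewrite -(size_dst i).
  apply: in_jungle_comp (Hj m Hm') _; apply: rst_sym; exact: comp_step.
- move=> w /=; rewrite -dst_cat.
  by have := Hr (i :: w); rewrite rho_word_cons => -[_ ->].
Qed.

Lemma class_iter z u i k :
  #|jclass delta rho z u| <= #|jclass delta rho z (iter k (delta_st delta rho i) u)|.
Proof.
elim: k => [|k IH] //=; exact: leq_trans IH (class_step _ _ _).
Qed.

Lemma val_iter n i k (t : n.-tuple Q) :
  val (iter k (@dtup n i) t) = iter k (delta_st delta rho i) (val t).
Proof. by elim: k => [|k IH] //=; rewrite IH. Qed.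

Lemma class_back z v i :
  #|jclass delta rho z (delta_st delta rho i v)| <= #|jclass delta rho z v|.
Proof.
pose vt := in_tuple v.
have H : fconnect (@dtup _ i) (dtup i vt) vt.
  rewrite (fconnect_sym (@dtup_inj _ i)); exact: fconnect1.
case/iter_findex: H.
move: (findex _ _ _) => k Hk.
have := class_iter z (delta_st delta rho i v) i k.
by have := congr1 val Hk; rewrite val_iter /= => ->.
Qed.

Lemma class_eq z u v : Defs.comp delta rho u v ->
  #|jclass delta rho z u| = #|jclass delta rho z v|.
Proof.
elim.
- move=> x y [i ->]; apply/eqP; rewrite eqn_leq class_step class_back //.
- by [].
- by move=> x y _ ->.
- by move=> x y w _ -> _ ->.
Qed.
End Aux.

Theorem proposition5p11 (Q Sg : finType) (delta : Sg -> Q -> Q) (rho : Q -> Sg -> Sg) :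
  0 < #|Q| -> 0 < #|Sg| ->
  connected_automaton delta ->
  bireversible delta rho ->
  (forall b : nat -> seq Q, is_branch delta rho b ->
     ~ (active delta rho b /\ self_liftable delta rho (in_branch delta rho b))) ->
  forall z : seq Q, jungle_base delta rho z ->
  forall u v : seq Q, stem delta rho z u -> stem delta rho z v ->
    #|jclass delta rho z u| = #|jclass delta rho z v|.
Proof.
move=> _ _ _ [_ rev _] _ z _ u v Hu Hv.
apply: (@class_eq _ _ delta rho rev); apply: rst_trans Hu _; exact: rst_sym.
Qed.
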